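(* Let $n\ge1$, $v>0$, $0\le\rho<\frac12v$, and let $B=(b_{jk})_{j,k=0}^n\in\mathbb{R}^{(n+1)\times(n+1)}$ with $b_{jk}=v-k$ if $j>k$, $b_{kk}=\frac v2-k-\rho$, $b_{jk}=-j$ if $j<k$. Set $\gamma=\sqrt{\frac14v^2-\rho^2}$. Then $$\det B=\Big(\frac v2-\rho\Big)(-i\gamma)^{n-1}\Big\{-i\gamma\,U_n\Big(-\frac{i(2\rho+1)}{2\gamma}\Big)+\Big(\frac v2+\rho\Big)U_{n-1}\Big(-\frac{i(2\rho+1)}{2\gamma}\Big)\Big\}.$$
   Context: $U_m$ denotes the $m$th Chebyshev polynomial of the second kind (evaluated at complex arguments as a polynomial); $i=\sqrt{-1}$. *)

(* Defs.v *)
From HB Require Import structures.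
From mathcomp Require Import all_boot all_order all_algebra.
From mathcomp.real_closed Require Export complex.
Set Implicit Arguments. Unset Strict Implicit. Unset Printing Implicit Defensive.
Import Order.TTheory GRing.Theory Num.Theory.
Local Open Scope ring_scope.

Fixpoint chebU_pair (C : comNzRingType) (m : nat) : {poly C} * {poly C} :=
  match m with
  | 0%N => (1, 2%:R *: 'X)
  | m'.+1 => let: (a, b) := chebU_pair C m' in (b, 2%:R *: 'X * b - a)
  end.

Definition chebU (C : comNzRingType) (m : nat) : {poly C} := (chebU_pair C m).1.

Definition matB (R : numFieldType) (n : nat) (v rho : R) : 'M[R]_n.+1 :=
  \matrix_(j < n.+1, k < n.+1)
    if (k < j)%N then v - (k : nat)%:R
    else if j == k then v / 2%:R - (k : nat)%:R - rho
    else - (j : nat)%:R.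

(* Main.v *)
Require Import Defs.
From HB Require Import structures.
From mathcomp Require Import all_boot all_order all_algebra.
From mathcomp.real_closed Require Import complex.
From mathcomp Require Import ring lra zify.
Import Order.TTheory GRing.Theory Num.Theory.
Set Implicit Arguments. Unset Strict Implicit.
Local Open Scope ring_scope.

Section Det.
Variable R : rcfType.
Variables v rho : R.

Definition fB (j k : nat) : R :=
  if (k < j)%N then v - k%:R
  else if j == k then v / 2%:R - k%:R - rho
  else - j%:R.

Definition MB m : 'M[R]_m := \matrix_(j < m, k < m) fB j k.

Lemma matB_MB n : matB n v rho = MB n.+1.
Proof. by []. Qed.

Lemma det_row_lin n (A A' : 'M[R]_n) i :
  (forall r k, r != i -> A r k = A' r k) ->
  \det A = \det A' + \sum_j (A i j - A' i j) * cofactor A' i j.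
Proof.
move=> H; rewrite (expand_det_row A i) (expand_det_row A' i) -big_split /=.
apply: eq_bigr => j _.
have -> : cofactor A i j = cofactor A' i j.
  rewrite /cofactor; congr (_ * _); congr (\det _).
  by apply/matrixP => r k; rewrite !mxE; apply: H; rewrite eq_sym neq_lift.
by rewrite mulrBl addrC subrK.
Qed.

Lemma det_col_lin n (A A' : 'M[R]_n) j :
  (forall r k, k != j -> A r k = A' r k) ->
  \det A = \det A' + \sum_i (A i j - A' i j) * cofactor A' i j.
Proof.
move=> H; rewrite (expand_det_col A j) (expand_det_col A' j) -big_split /=.
apply: eq_bigr => i _.
have -> : cofactor A i j = cofactor A' i j.
  rewrite /cofactor; congr (_ * _); congr (\det _).
  by apply/matrixP => r k; rewrite !mxE; apply: H; rewrite eq_sym neq_lift.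
by rewrite mulrBl addrC subrK.
Qed.


Lemma cof_max m : cofactor (MB m.+1) ord_max ord_max = \det (MB m).
Proof.
rewrite /cofactor /= addnn -signr_odd odd_double expr0 mul1r; congr (\det _).
by apply/matrixP => r k; rewrite !mxE !lift_max.
Qed.

Lemma MBrec m : \det (MB m.+2) =
  ((v/2%:R - rho - 1) - (v/2%:R + rho)) * \det (MB m.+1)
  + (v/2%:R + rho) * (v/2%:R - rho) * \det (MB m).
Proof.
set A := MB m.+2.
pose L : 'I_m.+2 := ord_max.
pose P : 'I_m.+2 := widen_ord (leqnSn _) ord_max.
pose A' := \matrix_(r, k) if r == L then A P k else A r k.
have HA : forall r k, r != L -> A r k = A' r k.
  by move=> r k /negbTE H; rewrite !mxE H.
rewrite (det_row_lin HA).
have -> : \det A' = 0.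
  apply: (@determinant_alternate _ _ _ L P).
    by rewrite -val_eqE /= eqn_leq ltnn.
  have PL : (P == L) = false by rewrite -val_eqE /= eqn_leq ltnn andbF.
  by move=> k; rewrite !mxE eqxx PL.
rewrite add0r big_ord_recr /= big_ord_recr /= big1 ?add0r; last first.
  move=> j _; rewrite /A /MB !mxE /fB /= eqxx ltn_ord.
  have h : (j < m.+1)%N by rewrite ltnS ltnW.
  by rewrite h subrr mul0r.
have cLL : cofactor A' L L = \det (MB m.+1).
  rewrite /cofactor /= addnn -signr_odd odd_double expr0 mul1r; congr (\det _).
  apply/matrixP => r k; rewrite !mxE.
  have -> : (lift L r == L) = false by apply/negbTE; rewrite eq_sym neq_lift.
  by rewrite !lift_max.
pose C := \matrix_(r < m.+1, k < m.+1) fB r (if (k < m)%N then (k : nat) else m.+1).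
have cLP : cofactor A' L P = - \det C.
  rewrite /cofactor /= addSn addnn -signr_odd /= odd_double expr1 mulN1r; congr (- \det _).
  apply/matrixP => r k; rewrite !mxE.
  have -> : (lift L r == L) = false by apply/negbTE; rewrite eq_sym neq_lift.
  rewrite !lift_max /=.
  rewrite /bump; case: (ltnP k m) => h.
    by [].
  have e : (k : nat) = m by apply/eqP; rewrite eqn_leq h andbT -ltnS ltn_ord.
  by rewrite e.
have dC : \det C = \det (MB m.+1) - (v / 2%:R - rho) * \det (MB m).
  have HC : forall r k, k != ord_max -> C r k = MB m.+1 r k.
    move=> r k hk; rewrite !mxE.
    have hk' : (k : nat) != m by move: hk; rewrite -val_eqE.
    have -> : (k < m)%N by rewrite ltn_neqAle hk' -ltnS ltn_ord.
    by [].
  rewrite (det_col_lin HC) big_ord_recr /= big1 ?add0r; last first.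
    move=> i _; rewrite !mxE /fB /= ltnn.
    have hi := ltn_ord i.
    have h3 : (m.+1 < i)%N = false by apply/negbTE; rewrite -leqNgt; lia.
    have h4 : (m < i)%N = false by apply/negbTE; rewrite -leqNgt; lia.
    have h5 : (i == m.+1 :> nat) = false by apply/negbTE; lia.
    have h6 : (i == m :> nat) = false by apply/negbTE; lia.
    by rewrite h3 h4 h5 h6 subrr mul0r.
  rewrite cof_max !mxE /fB /= ltnn.
  have h1 : (m.+1 < m)%N = false by rewrite ltnNge leqnSn.
  have h2 : (m == m.+1) = false by rewrite eqn_leq ltnn andbF.
  rewrite h1 h2 eqxx.
  by field.
have h1 : (m.+1 < m)%N = false by rewrite ltnNge leqnSn.
have h2 : (m == m.+1) = false by rewrite eqn_leq ltnn andbF.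
rewrite cLL cLP dC.
set D1 := \det (MB m.+1); set D0 := \det (MB m).
rewrite /A /MB !mxE eqxx /fB /= ltnSn ltnn h1 h2 !eqxx ltnn.
rewrite -[m.+1%:R]natr1.
by field.
Qed.

End Det.

Lemma chebU_rec (C : comNzRingType) m :
  chebU C m.+2 = 2%:R *: 'X * chebU C m.+1 - chebU C m.
Proof.
have H : forall k, chebU_pair C k = (chebU C k, chebU C k.+1).
  move=> k; rewrite /chebU /=; by case: (chebU_pair C k).
by rewrite /chebU /= H.
Qed.

Lemma chebU0 (C : comNzRingType) : chebU C 0 = 1.
Proof. by []. Qed.

Lemma chebU1 (C : comNzRingType) : chebU C 1 = 2%:R *: 'X.
Proof. by []. Qed.

Unset Implicit Arguments.
Local Open Scope complex_scope.

Lemma cD (R : rcfType) (y z : R) : (y + z)%:C = y%:C + z%:C.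
Proof. exact: rmorphD. Qed.
Lemma cM (R : rcfType) (y z : R) : (y * z)%:C = y%:C * z%:C.
Proof. exact: rmorphM. Qed.

Theorem lemma5p4 (R : rcfType) (n : nat) (v rho : R) :
  (1 <= n)%N -> 0 < v -> 0 <= rho -> rho < v / 2%:R ->
  let gamma : R := Num.sqrt (v ^+ 2 / 4%:R - rho ^+ 2) in
  let I : R[i] := Complex 0 1 in
  let x : R[i] := - I * ((2%:R * rho + 1)%:C / (2%:R * gamma)%:C) in
  (\det (matB n v rho))%:C =
    (v / 2%:R - rho)%:C * (- I * gamma%:C) ^+ n.-1 *
    (- I * gamma%:C * (chebU _ n).[x] + (v / 2%:R + rho)%:C * (chebU _ n.-1).[x]).
Proof.
move=> hn hv hr hrv gamma I x.
have hpos : 0 < v ^+ 2 / 4%:R - rho ^+ 2.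
  have -> : v ^+ 2 / 4%:R - rho ^+ 2 = (v / 2%:R - rho) * (v / 2%:R + rho) by field.
  apply: mulr_gt0; lra.
have gpos : 0 < gamma by rewrite sqrtr_gt0.
have gne : gamma != 0 by rewrite gt_eqF.
have g2 : gamma ^+ 2 = v ^+ 2 / 4%:R - rho ^+ 2 by rewrite sqr_sqrtr // ltW.
pose a' := v / 2%:R - rho - 1 - (v / 2%:R + rho).
pose b' := (v / 2%:R + rho) * (v / 2%:R - rho).
have Mrec : forall m, \det (MB v rho m.+2) = a' * \det (MB v rho m.+1) + b' * \det (MB v rho m).
  exact: MBrec.
set c := - I * gamma%:C.
have hx : 2%:R * x * c = a'%:C.
  have e : (2%:R * rho + 1)%:C / (2%:R * gamma)%:C = ((2%:R * rho + 1) / (2%:R * gamma))%:C.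
    by rewrite fmorph_div.
  have -> : 2%:R * x * c = I ^+ 2 * (2%:R * ((2%:R * rho + 1) / (2%:R * gamma)) * gamma)%:C.
    by rewrite /x e /c !rmorphM rmorph_nat /=; ring.
  have -> : 2%:R * ((2%:R * rho + 1) / (2%:R * gamma)) * gamma = - a'.
    by rewrite /a'; field; rewrite gne.
  by rewrite sqr_i rmorphN mulN1r opprK.
have hc : - c ^+ 2 = b'%:C.
  have -> : - c ^+ 2 = - I ^+ 2 * (gamma ^+ 2)%:C by rewrite /c rmorphXn /=; ring.
  by rewrite sqr_i opprK mul1r g2 /b'; congr (_ %:C); field.
pose W k := c ^+ k * (chebU _ k).[x].
have W0 : W 0%N = 1 by rewrite /W chebU0 expr0 mul1r hornerC.
have W1 : W 1%N = a'%:C by rewrite /W chebU1 expr1 hornerZ hornerX -hx; ring.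
have Wrec : forall m, W m.+2 = a'%:C * W m.+1 + b'%:C * W m.
  move=> m; rewrite /W chebU_rec -hx -hc hornerD hornerN hornerM hornerZ hornerX !exprS; ring.
pose W' k := if k is k'.+1 then W k' else 0.
have W'rec : forall m, W' m.+2 = a'%:C * W' m.+1 + b'%:C * W' m.
  case => [|m] /=; first by rewrite W1 W0; ring.
  exact: Wrec.
pose G k := (v / 2%:R - rho)%:C * (W' k.+1 + (v / 2%:R + rho)%:C * W' k).
have main : forall k, (\det (MB v rho k.+1))%:C = G k /\ (\det (MB v rho k.+2))%:C = G k.+1.
  have D1 : \det (MB v rho 1) = v / 2%:R - rho.
    by rewrite det_mx11 mxE /fB /= subr0.
  elim => [|k [IH1 IH2]].
    split; first by rewrite D1 /G /= W0; ring.
    rewrite Mrec D1 det_mx00 rmorphD !rmorphM /G /= W0 W1 rmorph1; ring.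
  split => //.
  rewrite Mrec cD (cM _ a') (cM _ b') IH1 IH2 /G !W'rec; ring.
case: n hn => [//|m] _.
rewrite matB_MB (proj1 (main m.+1)) /G /= -/c.
rewrite /W exprS; ring.
Qed.
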